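(* Let $A$ be a finite dimensional algebra with a regular $(\mathbb{Z}_2\times\mathbb{Z}_2)$-grading with bicharacter $\beta$, and assume that $A_{(0,0)}=K$. Then there exists a 2-cocycle $\alpha\in H^2(\mathbb{Z}_2\times\mathbb{Z}_2,K^{*})$ inducing $\beta$ such that $A\cong K^{\alpha}(\mathbb{Z}_2\times\mathbb{Z}_2)$ as $(\mathbb{Z}_2\times\mathbb{Z}_2)$-graded algebras.
   Context: All algebras are associative with unit over an algebraically closed field $K$ of characteristic $0$. For a finite abelian group $G$ (written additively, neutral element $0$), a $G$-grading on $A$ is a vector space decomposition $A=\bigoplus_{g\in G}A_g$ with $A_gA_h\subseteq A_{g+h}$. A $G$-graded algebra $A$ has a regular grading if (i) for every $n\in\mathbb{N}$ and every $(g_1,\dots,g_n)\in G^n$ there exist $a_i\in A_{g_i}$ with $a_1\cdots a_n\neq 0$, and (ii) there is a function $\beta\colon G\times G\to K^{*}$ with $a_ga_h=\beta(g,h)a_ha_g$ for all $g,h\in G$, $a_g\in A_g$, $a_h\in A_h$; $\beta$ is then a bicharacter ($\beta(g,h)=\beta(h,g)^{-1}$, multiplicative in each argument), called the bicharacter of $A$. For a 2-cocycle $\alpha\colon G\times G\to K^*$ (i.e. $\alpha(g,h+k)\alpha(h,k)=\alpha(g+h,k)\alpha(g,h)$), the twisted group algebra $K^{\alpha}G$ has basis $\{X_g: g\in G\}$ with $X_gX_h=\alpha(g,h)X_{g+h}$, $G$-graded by $(K^\alpha G)_g=KX_g$. We say $\alpha$ induces $\beta$ if $\beta(g,h)=\alpha(g,h)\alpha(h,g)^{-1}$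 for all $g,h$. *)

(* Defs.v *)
From HB Require Import structures.
From mathcomp Require Import all_boot all_order all_algebra all_field.
Set Implicit Arguments. Unset Strict Implicit. Unset Printing Implicit Defensive.
Import GRing.Theory.
Local Open Scope ring_scope.

Definition Z2Z2 := ('Z_2 * 'Z_2)%type.
HB.instance Definition _ := GRing.Zmodule.on Z2Z2.
HB.instance Definition _ := Finite.on Z2Z2.

Section Defs.
Variable K : fieldType.
Variable G : finZmodType.

Definition is_2cocycle (alpha : G -> G -> K) : Prop :=
  (forall g h, alpha g h != 0) /\
  (forall g h k, alpha g (h + k) * alpha h k = alpha (g + h) k * alpha g h).

Definition induces (alpha beta : G -> G -> K) : Prop :=
  forall g h, beta g h = alpha g h / alpha h g.

(* The twisted group algebra K^alpha G, realised on its coordinate space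
   {ffun G -> K} w.r.t. the basis (X_g); X_g is the indicator of g. *)
Definition tX (g : G) : {ffun G -> K} := [ffun k => if k == g then 1 else 0].

Definition tmul (alpha : G -> G -> K) (f1 f2 : {ffun G -> K}) : {ffun G -> K} :=
  [ffun k => \sum_(g : G) \sum_(h : G | g + h == k) alpha g h * f1 g * f2 h].

Definition tone (alpha : G -> G -> K) : {ffun G -> K} :=
  [ffun k => if k == 0 then (alpha 0 0)^-1 else 0].

Definition thom (g : G) (f : {ffun G -> K}) : Prop := forall h, h != g -> f h = 0.

Variable A : falgType K.

Definition is_grading (Ag : G -> {vspace A}) : Prop :=
  [/\ directv (\sum_(g : G) Ag g)%VS,
      (\sum_(g : G) Ag g)%VS = fullv &
      forall g h a b, a \in Ag g -> b \in Ag h -> a * b \in Ag (g + h)].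

Definition regular_grading (Ag : G -> {vspace A}) (beta : G -> G -> K) : Prop :=
  (forall (n : nat) (gs : n.-tuple G), exists xs : n.-tuple A,
      (forall i : 'I_n, tnth xs i \in Ag (tnth gs i)) /\
      \prod_(i < n) tnth xs i != 0) /\
  (forall g h, beta g h != 0) /\
  (forall g h a b, a \in Ag g -> b \in Ag h -> a * b = beta g h *: (b * a)).

Definition graded_iso_twisted (Ag : G -> {vspace A}) (alpha : G -> G -> K)
    (phi : A -> {ffun G -> K}) : Prop :=
  [/\ forall (c : K) a b g, phi (c *: a + b) g = c * phi a g + phi b g,
      bijective phi,
      forall a b, phi (a * b) = tmul alpha (phi a) (phi b),
      phi 1 = tone alpha &
      forall g f, (exists2 a, a \in Ag g & phi a = f) <-> thom g f].
End Defs.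

(* Main.v *)
Require Import Defs.
From HB Require Import structures.
From mathcomp Require Import all_boot all_order all_algebra all_field.
From mathcomp Require Import ring.
Set Implicit Arguments. Unset Strict Implicit. Unset Printing Implicit Defensive.
Import GRing.Theory.
Local Open Scope ring_scope.

Section Gen.
Variables (K : fieldType) (G : finZmodType) (A : falgType K).
Variables (Ag : G -> {vspace A}) (beta : G -> G -> K).
Hypothesis Hgr : is_grading Ag.
Hypothesis Hreg : regular_grading Ag beta.
Hypothesis H0 : Ag 0 = <[1 : A]>%VS.

Lemma scal_cancel (c1 c2 : K) (w : A) : w != 0 -> c1 *: w = c2 *: w -> c1 = c2.
Proof.
move=> w0 /eqP; rewrite -subr_eq0 -scalerBl scaler_eq0 (negbTE w0) orbF subr_eq0.
by move/eqP.
Qed.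

Lemma mulG g h a b : a \in Ag g -> b \in Ag h -> a * b \in Ag (g + h).
Proof. by case: Hgr => _ _; apply. Qed.

Lemma in0 a : a \in Ag 0 -> exists c, a = c *: 1.
Proof. by rewrite H0 => /vlineP. Qed.

Lemma unit_gen g : exists u : A,
  [/\ Ag g = <[u]>%VS, exists v, v * u = 1 & g = 0 -> u = 1].
Proof.
have [->|gn0] := eqVneq g 0.
  by exists 1; split => //; exists 1; rewrite mulr1.
case: Hreg => Hr [_ Hc].
have [xs [Hxs Hp]] := Hr 2 [tuple g; -g].
rewrite !big_ord_recl big_ord0 mulr1 in Hp.
set a := tnth xs ord0 in Hp; set b := tnth xs _ in Hp.
have Ha : a \in Ag g by exact: (Hxs ord0).
have Hb : b \in Ag (-g) by exact: (Hxs (lift ord0 ord0)).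
have [c' Hba] : exists c', b * a = c' *: 1.
  by apply: in0; rewrite -(addNr g); apply: mulG.
have c'0 : c' != 0.
  apply: contraNneq Hp => c'0; rewrite (Hc _ _ _ _ Ha Hb) Hba c'0 scale0r scaler0 //.
have Hbi : b * (c'^-1 *: a) = 1 by rewrite -scalerAr Hba scalerA mulVf // scale1r.
exists a; split; last by move=> /eqP; rewrite (negbTE gn0).
- apply/eqP; rewrite eqEsubv -memvE Ha andbT; apply/subvP => x Hx.
  have [d Hd] : exists d, x * b = d *: 1.
    by apply: in0; rewrite -(subrr g); apply: mulG.
  have -> : x = (x * b) * (c'^-1 *: a) by rewrite -mulrA Hbi mulr1.
  by rewrite Hd -scalerAl mul1r; apply: memvZ; apply: memvZ; apply: memv_line.
- by exists (c'^-1 *: b); rewrite -scalerAl Hba scalerA mulVf // scale1r.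
Qed.

Lemma one_neq0 : (1 : A) != 0. Proof. exact: oner_neq0. Qed.

Lemma gen_result : exists alpha : G -> G -> K,
    is_2cocycle alpha /\ induces alpha beta /\
    exists phi : A -> {ffun G -> K}, graded_iso_twisted Ag alpha phi.
Proof.
have [u Hu] := fin_all_exists unit_gen.
have Hug g : Ag g = <[u g]>%VS by case: (Hu g).
have Hu0 : u 0 = 1 by case: (Hu 0) => _ _; apply.
have Hinv g : exists v, v * u g = 1 by case: (Hu g).
have un0 g : u g != 0.
  have [v Hv] := Hinv g; apply/eqP => ug0; move: Hv; rewrite ug0 mulr0 => /eqP.
  by rewrite eq_sym (negbTE one_neq0).
have Hmem g : u g \in Ag g by rewrite Hug memv_line.
have Hal g : exists f : G -> K, forall h, u g * u h = f h *: u (g + h).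
  apply: (@fin_all_exists G (fun _ => K) (fun h c => u g * u h = c *: u (g+h))) => h; apply/vlineP; rewrite -Hug; exact: mulG.
have [al Hal'] := @fin_all_exists G (fun _ => G -> K) (fun g f => forall h, u g * u h = f h *: u (g + h)) Hal.
have Hprod g h : u g * u h = al g h *: u (g + h) by apply: Hal'.
have aln0 g h : al g h != 0.
  apply/negP => /eqP a0; have [v Hv] := Hinv g.
  have := Hprod g h; rewrite a0 scale0r => /(congr1 (fun x => v * x)).
  by rewrite mulrA Hv mul1r mulr0; apply/eqP.
exists al; split; [split=> [//|g h k]|split].
  apply: (@scal_cancel _ _ (u (g + h + k))) => //.
  have E1 : u g * (u h * u k) = (al g (h+k) * al h k) *: u (g+h+k).
    by rewrite Hprod -scalerAr Hprod scalerA mulrC addrA.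
  have E2 : (u g * u h) * u k = (al (g+h) k * al g h) *: u (g+h+k).
    by rewrite Hprod -scalerAl Hprod scalerA mulrC.
  by rewrite -E1 -E2 mulrA.
- move=> g h; case: Hreg => _ [_ Hc].
  have := Hc _ _ _ _ (Hmem g) (Hmem h); rewrite !Hprod scalerA addrC => /scal_cancel.
  by move=> /(_ (un0 _)) ->; rewrite mulfK.
pose n := #|G|.
pose X : n.-tuple A := [tuple u (enum_val i) | i < n].
have XE (i : 'I_n) : X`_i = u (enum_val i) by rewrite -tnth_nth tnth_mktuple.
have sumE (F : G -> A) : \sum_g F g = \sum_(i < n) F (enum_val i).
  rewrite (reindex (@enum_val G predT)) //; apply: onW_bij; apply: enum_val_bij.
have freeX : free X.
  apply/freeP => k Hk i.
  case: Hgr => Hd _ _.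
  move/directv_sum_independent: Hd => /(_ (fun g => k (enum_rank g) *: u g)) Hind.
  have : k (enum_rank (enum_val i)) *: u (enum_val i) = 0.
    apply: Hind => //.
      by move=> g _; rewrite Hug; apply: memvZ; apply: memv_line.
    rewrite sumE -[RHS]Hk; apply: eq_bigr => j _; by rewrite enum_valK XE.
  by move/eqP; rewrite scaler_eq0 (negbTE (un0 _)) orbF enum_valK => /eqP.
have spanX a : a \in <<X>>%VS.
  have : a \in (\sum_g Ag g)%VS by case: Hgr => _ -> _; rewrite memvf.
  case/memv_sumP => vs Hvs ->; apply: rpred_sum => g _.
  have := Hvs g isT; rewrite Hug => /vlineP [c ->].
  apply: memvZ; apply: memv_span; apply/tnthP; exists (enum_rank g).
  by rewrite tnth_mktuple enum_rankK.
pose phi a := [ffun g => coord X (enum_rank g) a].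
pose psi (f : {ffun G -> K}) := \sum_g f g *: u g.
have phiu g h : phi (u g) h = (h == g)%:R.
  by rewrite ffunE -{1}(enum_rankK g) -XE coord_free // (inj_eq enum_rank_inj) eq_sym.
have phiK a : psi (phi a) = a.
  rewrite {2}(coord_span (spanX a)) /psi sumE; apply: eq_bigr => i _.
  by rewrite ffunE enum_valK XE.
have phiL (c : K) a b : phi (c *: a + b) = [ffun g => c * phi a g + phi b g].
  by apply/ffunP => g; rewrite !ffunE linearP.
have cu h g : coord X (enum_rank g) (u h) = (g == h)%:R.
  by have := phiu h g; rewrite ffunE.
have psiK f : phi (psi f) = f.
  apply/ffunP => g; rewrite ffunE /psi linear_sum /= (bigD1 g) //= big1 => [|h hg].
    by rewrite addr0 linearZ /= cu eqxx mulr1.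
  by rewrite linearZ /= cu eq_sym (negbTE hg) mulr0.
have psiM f1 f2 : psi f1 * psi f2 = psi (tmul al f1 f2).
  rewrite /psi /tmul mulr_suml.
  under eq_bigr => g _ do rewrite mulr_sumr.
  under [RHS]eq_bigr => k _ do rewrite ffunE scaler_suml.
  rewrite [RHS]exchange_big /=.
  apply: eq_bigr => g _.
  under [RHS]eq_bigr => k _ do rewrite scaler_suml.
  rewrite [RHS](exchange_big_dep xpredT) //=.
  apply: eq_bigr => h _.
  rewrite (big_pred1 (g+h)) => [|k]; last by rewrite /= eq_sym.
  rewrite -scalerAl -scalerAr Hprod !scalerA; congr (_ *: _); ring.
have al00 : al 0 0 = 1.
  have := Hprod 0 0; rewrite addr0 Hu0 mulr1 -{1}[1 : A]scale1r.
  by move/(scal_cancel one_neq0) ->.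
exists phi; split.
- by move=> c a b g; rewrite phiL ffunE.
- by exists psi.
- by move=> a b; rewrite -{1}(phiK a) -{1}(phiK b) psiM psiK.
- apply/ffunP => k; rewrite -Hu0 phiu /tone ffunE al00 invr1.
  by case: (k == 0).
- move=> g f; split.
  + case=> a Ha <- h hg; rewrite Hug in Ha; case/vlineP: Ha => c ->.
    by rewrite ffunE linearZ /= cu (negbTE hg) mulr0.
  + move=> Hf; exists (psi f); last exact: psiK.
    rewrite /psi (bigD1 g) //= big1 ?addr0 => [|h hg]; last by rewrite Hf // scale0r.
    exact: memvZ (Hmem g).
Qed.
End Gen.

Theorem mainTheorem1 (K : closedFieldType) (HK : [pchar K] =i pred0)
    (A : falgType K) (Ag : Z2Z2 -> {vspace A}) (beta : Z2Z2 -> Z2Z2 -> K)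
    (Hgr : is_grading Ag) (Hreg : regular_grading Ag beta)
    (H0 : Ag 0 = <[1 : A]>%VS) :
  exists alpha : Z2Z2 -> Z2Z2 -> K,
    is_2cocycle alpha /\ induces alpha beta /\
    exists phi : A -> {ffun Z2Z2 -> K}, graded_iso_twisted Ag alpha phi.
Proof. exact: (gen_result Hgr Hreg H0). Qed.
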